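(* For $K\in\mathbb{N}$ let $f^{s,K}_{square}(t)=\frac{2s}{K}\sum_{k=1}^K([t-\tfrac{sk}{K}]_++[-t-\tfrac{sk}{K}]_+)$ and define $$f^K_{inner}(\mathbf{x})=\sum_{i=1}^d f^{\sqrt2,K}_{square}\Big(\tfrac{1}{\sqrt2}\begin{bmatrix}\mathbf{e}_i\\ \mathbf{e}_i\end{bmatrix}^\top\mathbf{x}\Big)-1,\qquad \mathbf{x}\in\mathbb{R}^{2d},$$ where $\mathbf{e}_i$ is the $i$-th standard basis vector of $\mathbb{R}^d$. Then $\sup_{\mathbf{x}\in\mathcal{X}_d}|f^K_{inner}(\mathbf{x})-\langle\mathbf{x}^{(1)},\mathbf{x}^{(2)}\rangle|\le2d(\frac1K+\frac1{K^2})$. Further, there is an absolute constant $C$ such that for every $\beta>0$, $\beta^{-1}f^K_{inner}\in\mathcal{N}_{2,2Kd}$ and $R_2(\beta^{-1}f^K_{inner};2Kd)\le C(d\beta^{-1}+\beta^{-2})$.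
   Context: $\mathcal{X}_d=\mathbb{S}^{d-1}\times\mathbb{S}^{d-1}\subset\mathbb{R}^{2d}$, $d\ge2$; $\mathbf{x}^{(1)},\mathbf{x}^{(2)}$ are the first and last $d$ coordinates of $\mathbf{x}$. $\mathcal{N}_{2,\omega}$ is the set of depth-two ReLU networks $f_\phi(\mathbf{x})=\sum_{k=1}^{\omega_1}a_k[\mathbf{w}_k^\top\mathbf{x}+b_k]_++c$ with $\omega_1\le\omega$; $R_2(f;\omega)=\inf\{\|\phi\|^2/2: f_\phi=f\text{ on }\mathcal{X}_d,\ \omega_1\le\omega\}$, where $\|\phi\|^2$ is the sum of squares of all weights and biases. *)

(* Defs.v *)
From HB Require Import structures.
From mathcomp Require Import all_boot all_order all_algebra.
From mathcomp Require Import all_classical all_reals ereal.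
Set Implicit Arguments. Unset Strict Implicit. Unset Printing Implicit Defensive.
Import Order.TTheory GRing.Theory Num.Theory.
Local Open Scope ring_scope.

Section Defs.
Variable R : realType.

Definition relu (t : R) : R := Num.max t 0.

Definition fsquare (s : R) (K : nat) (t : R) : R :=
  (2 * s / K%:R) *
  \sum_(k < K) (relu (t - s * (k.+1)%:R / K%:R) + relu (- t - s * (k.+1)%:R / K%:R)).

(* points of R^{2d} are functions 'I_(d + d) -> R; x^(1) = first d coords,
   x^(2) = last d coords *)
Definition x1 (d : nat) (x : 'I_(d + d) -> R) (i : 'I_d) : R := x (lshift d i).
Definition x2 (d : nat) (x : 'I_(d + d) -> R) (i : 'I_d) : R := x (rshift d i).

Definition in_Xd (d : nat) (x : 'I_(d + d) -> R) : Prop :=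
  \sum_(i < d) x1 x i ^+ 2 = 1 /\ \sum_(i < d) x2 x i ^+ 2 = 1.

Definition inner12 (d : nat) (x : 'I_(d + d) -> R) : R :=
  \sum_(i < d) x1 x i * x2 x i.

Definition finner (d K : nat) (x : 'I_(d + d) -> R) : R :=
  \sum_(i < d) fsquare (Num.sqrt 2) K ((x1 x i + x2 x i) / Num.sqrt 2) - 1.

Definition net (d n : nat) (a : 'I_n -> R) (W : 'I_n -> 'I_(d + d) -> R)
  (b : 'I_n -> R) (c : R) (x : 'I_(d + d) -> R) : R :=
  \sum_(k < n) a k * relu (\sum_(j < d + d) W k j * x j + b k) + c.

Definition sqnorm (d n : nat) (a : 'I_n -> R) (W : 'I_n -> 'I_(d + d) -> R)
  (b : 'I_n -> R) (c : R) : R :=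
  \sum_(k < n) a k ^+ 2 + \sum_(k < n) \sum_(j < d + d) W k j ^+ 2
  + \sum_(k < n) b k ^+ 2 + c ^+ 2.

Definition inN2 (d omega : nat) (f : ('I_(d + d) -> R) -> R) : Prop :=
  exists (n : nat) (a : 'I_n -> R) (W : 'I_n -> 'I_(d + d) -> R)
         (b : 'I_n -> R) (c : R),
    (n <= omega)%N /\ forall x, in_Xd x -> net a W b c x = f x.

(* R_2(f; omega) = inf { ||phi||^2/2 : f_phi = f on X_d, width <= omega }
   (extended-real infimum; +oo if no such network) *)
Definition R2 (d omega : nat) (f : ('I_(d + d) -> R) -> R) : \bar R :=
  ereal_inf [set e : \bar R | exists (n : nat) (a : 'I_n -> R)
         (W : 'I_n -> 'I_(d + d) -> R) (b : 'I_n -> R) (c : R),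
         [/\ (n <= omega)%N, (forall x, in_Xd x -> net a W b c x = f x) &
             e = (sqnorm a W b c / 2)%:E]].
End Defs.

(* Main.v *)
Require Import Defs.
From HB Require Import structures.
From mathcomp Require Import all_boot all_order all_algebra.
From mathcomp Require Import all_classical all_reals ereal.
From mathcomp Require Import ring lra zify.
Import Order.TTheory GRing.Theory Num.Theory.
Local Open Scope ring_scope.

Section Aux.
Variable R : realType.
Implicit Types (u h t : R).

Lemma relu_ge0 u : 0 <= relu u.
Proof. by rewrite /relu le_max lexx orbT. Qed.

Lemma relu_pos u : 0 <= u -> relu u = u.
Proof. by move=> h; rewrite /relu max_l. Qed.

Lemma relu_neg u : u <= 0 -> relu u = 0.
Proof. by move=> h; rewrite /relu max_r. Qed.

Lemma relu_scale c u : 0 <= c -> relu (c * u) = c * relu u.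
Proof. by move=> hc; rewrite /relu maxr_pMr // mulr0. Qed.

Lemma term_bound u h : 0 <= h ->
  0 <= relu u ^+ 2 - relu (u - h) ^+ 2 - 2 * h * relu (u - h) <= h ^+ 2.
Proof.
move=> h0.
have [uh|uh] := lerP h u.
  rewrite relu_pos ?relu_pos; [|lra|lra].
  apply/andP; split; nra.
rewrite (relu_neg (u - h)); last lra.
have [u0|u0] := lerP 0 u.
  rewrite relu_pos //; apply/andP; split; nra.
rewrite relu_neg; last lra.
apply/andP; split; nra.
Qed.

Lemma gplus_bound (K : nat) (s u : R) : (0 < K)%N -> 0 <= s -> u <= s ->
  0 <= relu u ^+ 2 - 2 * s / K%:R * \sum_(k < K) relu (u - s * (k.+1)%:R / K%:R)
  <= K%:R * (s / K%:R) ^+ 2.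
Proof.
move=> K0 s0 us.
set h := s / K%:R.
have Kr : 0 < (K%:R : R) by rewrite ltr0n.
have h0 : 0 <= h by rewrite /h divr_ge0 // ltW.
pose F (k : nat) := relu (u - h * k%:R).
have E : forall k : nat, u - s * (k.+1)%:R / K%:R = u - h * k%:R - h.
  by move=> k; rewrite /h -natr1; ring.
have tel : \sum_(k < K) (F k ^+ 2 - F k.+1 ^+ 2) = relu u ^+ 2.
  rewrite -(big_mkord xpredT (fun k => F k ^+ 2 - F k.+1 ^+ 2)).
  have -> : \sum_(0 <= k < K) (F k ^+ 2 - F k.+1 ^+ 2)
           = - \sum_(0 <= k < K) (F k.+1 ^+ 2 - F k ^+ 2).
    by rewrite -sumrN; apply: eq_bigr => k _; ring.
  rewrite telescope_sumr // /F mulr0 subr0.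
  have -> : u - h * K%:R = u - s by rewrite /h mulfVK // gt_eqF.
  rewrite (relu_neg (u - s)); last lra.
  by rewrite expr0n /=; ring.
have -> : 2 * s / K%:R * \sum_(k < K) relu (u - s * (k.+1)%:R / K%:R)
        = \sum_(k < K) (2 * h * relu (u - h * k%:R - h)).
  rewrite mulr_sumr; apply: eq_bigr => k _; rewrite E /h; ring.
rewrite -tel -sumrB.
have -> : K%:R * h ^+ 2 = \sum_(k < K) h ^+ 2 by rewrite sumr_const card_ord mulr_natl.
have Fk : forall k : nat, F k.+1 = relu (u - h * k%:R - h).
  by move=> k; rewrite /F -natr1; congr relu; ring.
apply/andP; split.
  apply: sumr_ge0 => k _; rewrite Fk.
  by have /andP[+ _] := term_bound (u - h * k%:R) h h0.
apply: ler_sum => k _; rewrite Fk.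
by have /andP[_ +] := term_bound (u - h * k%:R) h h0.
Qed.

Lemma sum_zero_neg (K : nat) (s u : R) : 0 <= s -> u <= 0 ->
  \sum_(k < K) relu (u - s * (k.+1)%:R / K%:R) = 0.
Proof.
move=> s0 u0; apply: big1 => k _; apply: relu_neg.
have : 0 <= s * (k.+1)%:R / K%:R by rewrite divr_ge0 ?mulr_ge0.
lra.
Qed.

Lemma fsq_bound (K : nat) (s t : R) : (0 < K)%N -> 0 <= s -> -s <= t <= s ->
  0 <= t ^+ 2 - fsquare s K t <= K%:R * (s / K%:R) ^+ 2.
Proof.
move=> K0 s0 /andP[t1 t2].
rewrite /fsquare big_split /= mulrDr.
have [t0|t0] := lerP 0 t.
  rewrite (@sum_zero_neg K s (- t) s0); last lra.
  rewrite mulr0 addr0.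
  have := @gplus_bound K s t K0 s0 t2; rewrite relu_pos //.
have := @gplus_bound K s (- t) K0 s0 ltac:(lra).
rewrite (@sum_zero_neg K s (t) s0); last lra.
rewrite mulr0 add0r relu_pos; last lra.
by rewrite sqrrN.
Qed.
End Aux.

Lemma le_sum_one (R : realType) (d : nat) (F : 'I_d -> R) (i : 'I_d) :
  (forall j, 0 <= F j) -> F i <= \sum_(j < d) F j.
Proof.
move=> F0; rewrite (bigD1 i) //= lerDl; exact: sumr_ge0.
Qed.

Lemma sqrt2E (R : realType) : Num.sqrt (2 : R) ^+ 2 = 2.
Proof. by rewrite sqr_sqrtr. Qed.

Lemma part1 (R : realType) (d K : nat) : (2 <= d)%N -> (0 < K)%N ->
     forall x : 'I_(d + d) -> R, in_Xd x ->
       `|finner K x - inner12 x| <= 2 * d%:R * (1 / K%:R + 1 / (K%:R ^+ 2)).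
Proof.
move=> d2 K0 x [h1 h2].
set s := Num.sqrt (2 : R).
have s2 : s ^+ 2 = 2 by exact: sqrt2E.
have s0 : 0 < s by rewrite sqrtr_gt0.
have Kr : 0 < (K%:R : R) by rewrite ltr0n.
pose t (i : 'I_d) := (x1 x i + x2 x i) / s.
have tb : forall i, 0 <= t i ^+ 2 - fsquare s K (t i) <= K%:R * (s / K%:R) ^+ 2.
  move=> i; apply: fsq_bound => //; first exact: ltW.
  have a1 : x1 x i ^+ 2 <= 1.
    rewrite -h1; apply: (@le_sum_one R d (fun j => x1 x j ^+ 2) i) => j; exact: sqr_ge0.
  have b1 : x2 x i ^+ 2 <= 1.
    by rewrite -h2; apply: (@le_sum_one R d (fun j => x2 x j ^+ 2) i) => j; exact: sqr_ge0.
  have sq4 : (x1 x i + x2 x i) ^+ 2 <= 4.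
    have := sqr_ge0 (x1 x i - x2 x i); nra.
  have ab : x1 x i + x2 x i <= s * s by rewrite -expr2 s2; nra.
  have ab' : - (s * s) <= x1 x i + x2 x i by rewrite -expr2 s2; nra.
  rewrite /t; apply/andP; split.
    by rewrite ler_pdivlMr // mulNr.
  by rewrite ler_pdivrMr.
have tsq : \sum_(i < d) t i ^+ 2 = 1 + inner12 x.
  have -> : \sum_(i < d) t i ^+ 2
       = (\sum_(i < d) x1 x i ^+ 2) / 2 + inner12 x + (\sum_(i < d) x2 x i ^+ 2) / 2.
    rewrite /inner12 !mulr_suml -!big_split /=; apply: eq_bigr => i _.
    by rewrite /t expr_div_n s2; field.
  by rewrite h1 h2; field.
have E : finner K x - inner12 x = - \sum_(i < d) (t i ^+ 2 - fsquare s K (t i)).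
  rewrite /finner sumrB tsq -/s; rewrite /t; ring.

rewrite E normrN.
apply: le_trans (ler_norm_sum _ _ _) _.
apply: le_trans (ler_sum _ (fun i _ => _ : `|t i ^+ 2 - fsquare s K (t i)| <= K%:R * (s / K%:R) ^+ 2)) _.
  by move=> i _; have /andP[h3 h4] := tb i; rewrite ger0_norm.
rewrite sumr_const card_ord expr_div_n s2.
have : 0 <= 2 * d%:R / K%:R ^+ 2 :> R by rewrite divr_ge0 ?mulr_ge0 ?exprn_ge0 // ltW.
have -> : K%:R * (2 / K%:R ^+ 2) *+ d = 2 * d%:R / K%:R :> R.
  by rewrite -mulr_natr; field; rewrite gt_eqF.
have -> : 2 * d%:R * (1 / K%:R + 1 / K%:R ^+ 2) = 2 * d%:R / K%:R + 2 * d%:R / K%:R ^+ 2 :> R.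
  by field; rewrite gt_eqF.
lra.
Qed.

Lemma sum_if_eq (R : realType) d (i : 'I_d) (F : 'I_d -> R) :
  \sum_(j < d) (if (val j == val i)%N then F j else 0) = F i.
Proof.
rewrite (bigD1 i) //= eqxx big1 ?addr0 // => j nji.
by rewrite ifF //; apply/negbTE.
Qed.

Lemma sum_if_split (R : realType) d (i : 'I_d) (g : 'I_(d + d) -> R) :
  \sum_(j < d + d) (if (val j %% d == val i)%N then g j else 0)
  = g (lshift d i) + g (rshift d i).
Proof.
rewrite big_split_ord /=; congr (_ + _).
  rewrite -(@sum_if_eq R d i (fun j => g (lshift d j))); apply: eq_bigr => j _.
  by rewrite /= modn_small.
rewrite -(@sum_if_eq R d i (fun j => g (rshift d j))); apply: eq_bigr => j _.
by rewrite /= modnDl modn_small.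
Qed.

Lemma sum_reindex (R : realType) (a b : nat) (F : nat -> R) :
  \sum_(0 <= m < a * b) F m = \sum_(0 <= i < a) \sum_(0 <= j < b) F (i * b + j)%N.
Proof.
elim: a => [|a IH]; first by rewrite mul0n !big_geq.
rewrite big_nat_recr //= -IH mulSnr (@big_cat_nat _ _ _ (a * b)%N) ?leq_addr //=.
congr (_ + _).

rewrite -{1}(add0n (a * b)%N) big_addn addKn.
by apply: eq_bigr => j _; rewrite addnC.
Qed.

Lemma sum_shift (R : realType) (K : nat) (F : nat -> R) :
  \sum_(K <= j < K + K) F j = \sum_(0 <= j < K) F (j + K)%N.
Proof. by rewrite -{1}[K]add0n big_addn addnK. Qed.

Lemma part2 (R : realType) : exists C : R, forall (d K : nat), (2 <= d)%N -> (0 < K)%N ->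
    forall beta : R, 0 < beta ->
      inN2 (2 * K * d) (fun x : 'I_(d + d) -> R => beta^-1 * finner K x) /\
      (R2 (2 * K * d) (fun x : 'I_(d + d) -> R => beta^-1 * finner K x)%R
         <= (C * (d%:R / beta + 1 / beta ^+ 2))%R%:E)%E.
Proof.
exists 12 => d K d2 K0 beta b0.
set s := Num.sqrt (2 : R).
have s2 : s ^+ 2 = 2 by exact: sqrt2E.
have s0 : 0 < s by rewrite sqrtr_gt0.
have Kr : 0 < (K%:R : R) by rewrite ltr0n.
have KK : (0 < K + K)%N by rewrite addn_gt0 K0.
set a0 := beta^-1 * (2 * s / K%:R).
have a00 : 0 < a0 by rewrite mulr_gt0 ?invr_gt0 // divr_gt0 // mulr_gt0.
set mu := Num.sqrt a0.
have mu2 : mu * mu = a0 by rewrite -expr2 sqr_sqrtr // ltW.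
have mu0 : 0 <= mu by exact: sqrtr_ge0.
pose sgp (j : nat) : R := if (j < K)%N then 1 else -1.
pose kkp (j : nat) : nat := if (j < K)%N then j else (j - K)%N.
pose n := (d * (K + K))%N.
pose Wf (m : nat) (j : 'I_(d + d)) : R :=
  if (val j %% d == m %/ (K + K))%N then sgp (m %% (K + K))%N * mu / s else 0.
pose bf (m : nat) : R := - (mu * (s * (kkp (m %% (K + K))%N).+1%:R / K%:R)).
pose an : 'I_n -> R := fun _ => mu.
pose Wn : 'I_n -> 'I_(d + d) -> R := fun m => Wf (val m).
pose bn : 'I_n -> R := fun m => bf (val m).
pose c : R := - beta^-1.
have netE : forall x, net an Wn bn c x = beta^-1 * finner K x.
  move=> x.
  pose G (m : nat) := mu * relu (\sum_(j < d + d) Wf m j * x j + bf m).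
  rewrite /net.
  have -> : \sum_(k < n) an k * relu (\sum_(j < d + d) Wn k j * x j + bn k)
          = \sum_(0 <= m < n) G m by rewrite big_mkord.
  rewrite sum_reindex big_mkord /finner mulrBr mulr1 mulr_sumr; congr (_ + _).
  apply: eq_bigr => i _.
  pose t := (x1 x i + x2 x i) / s.
  transitivity (\sum_(0 <= j < K + K) a0 * relu (sgp j * t - s * (kkp j).+1%:R / K%:R)).
    apply: eq_big_nat => j /andP[_ hj].
    rewrite /G /Wf /bf divnMDl // divn_small // addn0 modnMDl modn_small //.
    have -> : \sum_(j0 < d + d)
          (if (val j0 %% d == i)%N then sgp j * mu / s else 0) * x j0
        = \sum_(j0 < d + d) (if (val j0 %% d == i)%N then sgp j * mu / s * x j0 else 0).
      by apply: eq_bigr => j0 _; case: ifP; rewrite ?mul0r.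
    rewrite (@sum_if_split R d i (fun j0 => sgp j * mu / s * x j0)).
    have -> : sgp j * mu / s * x (lshift d i) + sgp j * mu / s * x (rshift d i)
            - mu * (s * (kkp j).+1%:R / K%:R)
            = mu * (sgp j * t - s * (kkp j).+1%:R / K%:R).
      by rewrite /t /x1 /x2; ring.
    by rewrite relu_scale // mulrA mu2.
  rewrite (@big_cat_nat _ _ _ K) ?leq_addr //= sum_shift.
  rewrite /fsquare -/t !big_mkord mulrA -/a0 mulr_sumr -big_split /=.
  apply: eq_bigr => j _; have hj := ltn_ord j.
  rewrite /sgp /kkp hj ltnNge leq_addl /= addnK mulrDr mul1r mulN1r.
  by [].
have sg2 : forall j, sgp j ^+ 2 = 1.
  by move=> j; rewrite /sgp; case: ifP => _; rewrite ?sqrrN expr1n.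
have hW : forall k : 'I_n, \sum_(j < d + d) Wn k j ^+ 2 = a0.
  move=> k.
  have hk : (val k %/ (K + K) < d)%N by rewrite ltn_divLR //; exact: (ltn_ord k).
  pose i := Ordinal hk.
  transitivity (\sum_(j < d + d)
     (if (val j %% d == val i)%N then (sgp (val k %% (K + K))%N * mu / s) ^+ 2 else 0)).
    by apply: eq_bigr => j _; rewrite /Wn /Wf /=; case: ifP; rewrite ?expr0n.
  rewrite (@sum_if_split R d i (fun _ => (sgp (val k %% (K + K))%N * mu / s) ^+ 2)).
  by rewrite expr_div_n exprMn s2 sg2 expr2 mu2; field.
have hb : forall k : 'I_n, bn k ^+ 2 <= 2 * a0.
  move=> k; rewrite /bn /bf.
  set q := (kkp (val k %% (K + K))%N).+1%:R : R.
  have hq : (kkp (val k %% (K + K))%N < K)%N.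
    have := ltn_pmod (val k) KK; rewrite /kkp; case: ifP => //; lia.
  have q0 : 0 <= q / K%:R by rewrite divr_ge0 // ler0n.
  have q1 : q / K%:R <= 1 by rewrite ler_pdivrMr // mul1r ler_nat.
  have -> : - (mu * (s * q / K%:R)) = - (mu * s * (q / K%:R)) by ring.
  have -> : (- (mu * s * (q / K%:R))) ^+ 2 = a0 * 2 * (q / K%:R) ^+ 2.
    by rewrite -mu2 -s2; ring.
  have : (q / K%:R) ^+ 2 <= 1 by rewrite expr_le1.
  nra.
have nE : n%:R * a0 = 4 * s * d%:R * beta^-1.
  by rewrite /n /a0 natrM natrD; field; rewrite ?(gt_eqF Kr) ?(gt_eqF b0).
have sb : s <= 3 / 2.
  have : s ^+ 2 <= (3 / 2) ^+ 2 by rewrite s2; lra.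
  by rewrite ler_pXn2r // ?nnegrE ?(ltW s0) //; lra.
have key : sqnorm an Wn bn c <= n%:R * a0 + n%:R * a0 + n%:R * (2 * a0) + beta^-1 ^+ 2.
  rewrite /sqnorm /c sqrrN; apply: lerD => //; apply: lerD; first apply: lerD.
  by rewrite /an sumr_const card_ord expr2 mu2 mulr_natl.
  by rewrite (eq_bigr (fun _ => a0)) ?sumr_const ?card_ord ?mulr_natl.
  apply: le_trans (ler_sum _ (fun k _ => hb k)) _.
  by rewrite sumr_const card_ord [X in _ <= X]mulrC mulr_natr.
split.
  exists n, an, Wn, bn, c; split; last by move=> x _; exact: netE.
  by rewrite /n; lia.
apply: (@le_trans _ _ (sqnorm an Wn bn c / 2)%:E).
  apply: ereal_inf_lbound.
  exists n, an, Wn, bn, c; split; [rewrite /n; lia | move=> x _; exact: netE | by []].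
rewrite lee_fin.
have ib0 : 0 < beta^-1 by rewrite invr_gt0.
have dd : 0 <= d%:R * beta^-1 :> R by rewrite mulr_ge0 ?ler0n // ltW.
have -> : d%:R / beta + 1 / beta ^+ 2 = d%:R * beta^-1 + beta^-1 ^+ 2.
  by rewrite exprVn div1r.
have hs : s * (d%:R * beta^-1) <= 3 / 2 * (d%:R * beta^-1) by rewrite ler_wpM2r.
have hi : 0 <= beta^-1 ^+ 2 by rewrite sqr_ge0.
have key2 : sqnorm an Wn bn c <= 16 * (s * (d%:R * beta^-1)) + beta^-1 ^+ 2.
  apply: (le_trans key).
  have -> : n%:R * a0 + n%:R * a0 + n%:R * (2 * a0) = 4 * (n%:R * a0) by ring.
  rewrite nE.
  have -> : 4 * (4 * s * d%:R * beta^-1) = 16 * (s * (d%:R * beta^-1)) by ring.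
  by [].
move: key2 hs hi dd.
set A := sqnorm an Wn bn c; set B := s * (d%:R * beta^-1); set D := d%:R * beta^-1.
set E := beta^-1 ^+ 2.
lra.
Qed.

Theorem lemma13 (R : realType) :
  (forall (d K : nat), (2 <= d)%N -> (0 < K)%N ->
     forall x : 'I_(d + d) -> R, in_Xd x ->
       `|finner K x - inner12 x| <= 2 * d%:R * (1 / K%:R + 1 / (K%:R ^+ 2)))
  /\
  exists C : R, forall (d K : nat), (2 <= d)%N -> (0 < K)%N ->
    forall beta : R, 0 < beta ->
      inN2 (2 * K * d) (fun x : 'I_(d + d) -> R => beta^-1 * finner K x) /\
      (R2 (2 * K * d) (fun x : 'I_(d + d) -> R => beta^-1 * finner K x)%R
         <= (C * (d%:R / beta + 1 / beta ^+ 2))%R%:E)%E.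
Proof.
split; first exact: part1.
exact: part2.
Qed.
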